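(* If $f(x_1,\ldots,x_n)$ is a Chow function, then every restriction of $f$ (obtained by fixing some of its variables to constants) is a Chow function.
   Context: The Chow parameters of a Boolean function $f(x_1,\ldots,x_n)$ are $(w_1(f),\ldots,w_n(f),w(f))$, where $w(f)$ is the number of true points and $w_i(f)$ the number of true points with $x_i=1$. $f$ is a Chow function if no other Boolean function of the same variables has the same Chow parameters. A restriction of $f$ is a function $f_{|x_{i_1}=\alpha_1,\ldots,x_{i_k}=\alpha_k}$ of the remaining variables obtained by fixing $x_{i_j}=\alpha_j\in\{0,1\}$. *)

(* Defs.v *)
From HB Require Import structures.
From mathcomp Require Import all_boot.
Set Implicit Arguments. Unset Strict Implicit. Unset Printing Implicit Defensive.

Definition boolfun (I : finType) := {ffun {ffun I -> bool} -> bool}.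

Definition chow_w (I : finType) (f : boolfun I) : nat := #|[set x | f x]|.
Definition chow_wi (I : finType) (f : boolfun I) (i : I) : nat :=
  #|[set x | f x && x i]|.

Definition chow_function (I : finType) (f : boolfun I) : Prop :=
  forall g : boolfun I,
    (forall i, chow_wi g i = chow_wi f i) -> chow_w g = chow_w f -> g = f.

Definition rest_vars (I : finType) (S : {set I}) : finType :=
  {i : I | i \notin S}.

Definition extend_assign (I : finType) (S : {set I}) (alpha : {ffun I -> bool})
  (y : {ffun rest_vars S -> bool}) : {ffun I -> bool} :=
  [ffun i => match (insub i : option (rest_vars S)) with
             | Some j => y j
             | None => alpha i
             end].

Definition restriction (I : finType) (f : boolfun I) (S : {set I})
  (alpha : {ffun I -> bool}) : boolfun (rest_vars S) :=
  [ffun y => f (@extend_assign I S alpha y)].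

(* Main.v *)
Require Import Defs.
From mathcomp Require Import all_boot.
Set Implicit Arguments. Unset Strict Implicit. Unset Printing Implicit Defensive.

Section Aux.
Variables (I : finType) (S : {set I}) (alpha : {ffun I -> bool}).

Definition Aset : {set {ffun I -> bool}} := [set x : {ffun I -> bool} | [forall i in S, x i == alpha i]].
Definition proj (x : {ffun I -> bool}) : {ffun rest_vars S -> bool} := [ffun j => x (val j)].
Local Notation ext := (@extend_assign I S alpha).

Lemma ext_val y (j : rest_vars S) : ext y (val j) = y j.
Proof. by rewrite /extend_assign ffunE valK. Qed.

Lemma ext_in y i : i \in S -> ext y i = alpha i.
Proof.
move=> Hi; rewrite /extend_assign ffunE; case: insubP => // j.
by rewrite /= Hi.
Qed.

Lemma ext_notin y i (Hi : i \notin S) : ext y i = y (exist _ i Hi).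
Proof. by rewrite -(ext_val y (exist _ i Hi)). Qed.

Lemma projK y : proj (ext y) = y.
Proof. by apply/ffunP => j; rewrite ffunE ext_val. Qed.

Lemma ext_inj : injective ext.
Proof. by move=> y1 y2 E; rewrite -(projK y1) E projK. Qed.

Lemma ext_A y : ext y \in Aset.
Proof. by rewrite inE; apply/forall_inP => i Hi; rewrite ext_in. Qed.

Lemma A_ext x : x \in Aset -> ext (proj x) = x.
Proof.
rewrite inE => /forall_inP H; apply/ffunP => i.
rewrite /extend_assign ffunE; case: insubP => [j _ <-|].
  by rewrite ffunE.
by rewrite negbK => Hi; move/eqP: (H i Hi).
Qed.

Lemma cnt (h : {ffun I -> bool} -> bool) (P : pred {ffun I -> bool}) :
  #|[set x | h x && P x] :&: Aset| = #|[set y | h (ext y) && P (ext y)]|.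
Proof.
rewrite -(card_imset _ ext_inj); apply: eq_card => x.
rewrite !inE; apply/idP/imsetP.
  case/andP=> /andP[h1 h2] hA; exists (proj x); rewrite ?inE (A_ext (_ : x \in Aset)) ?inE //.
  by rewrite h1 h2.
case=> y; rewrite inE => hy ->; rewrite hy; by have := ext_A y; rewrite inE.
Qed.

End Aux.

Theorem mainTheorem13 (n : nat) (f : boolfun 'I_n) :
  chow_function f ->
  forall (S : {set 'I_n}) (alpha : {ffun 'I_n -> bool}),
    chow_function (restriction f S alpha).
Proof.
move=> Hf S alpha g Hwi Hw.
pose G : boolfun 'I_n := [ffun x => if x \in Aset S alpha then g (proj S x) else f x].
have key : forall P : pred {ffun 'I_n -> bool},
  #|[set y | g y && P (extend_assign alpha y)]| =
  #|[set y | restriction f S alpha y && P (extend_assign alpha y)]| ->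
  #|[set x | G x && P x]| = #|[set x | f x && P x]|.
  move=> P E.
  rewrite -(cardsID (Aset S alpha) [set x | G x && P x]).
  rewrite -(cardsID (Aset S alpha) [set x | f x && P x]).
  rewrite !cnt; congr addn.
    transitivity #|[set y | g y && P (extend_assign alpha y)]|.
      by apply: eq_card => y; rewrite !inE /G ffunE ext_A projK.
    rewrite E; apply: eq_card => y; by rewrite !inE ffunE.
  apply: eq_card => x; rewrite !inE /G ffunE.
  by rewrite [x \in Aset S alpha]inE; case: ([forall i in S, x i == alpha i]).
have HG : G = f.
  apply: Hf.
    move=> i; rewrite /chow_wi; apply: key.
    case: (boolP (i \in S)) => Hi.
      under eq_finset => y do rewrite ext_in //.
      under [in RHS]eq_finset => y do rewrite ext_in //.
      case: (alpha i).
        under eq_finset => y do rewrite andbT.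
        under [in RHS]eq_finset => y do rewrite andbT.
        exact: Hw.
      under eq_finset => y do rewrite andbF.
      by under [in RHS]eq_finset => y do rewrite andbF.
    under eq_finset => y do rewrite (ext_notin _ _ Hi).
    under [in RHS]eq_finset => y do rewrite (ext_notin _ _ Hi).
    exact: Hwi.
  rewrite /chow_w.
  have E1 : forall (J : finType) (h : {ffun J -> bool} -> bool) (Q : {ffun J -> bool} -> {ffun 'I_n -> bool}),
    #|[set y | h y && predT (Q y)]| = #|[set y | h y]|.
    by move=> J h Q; apply: eq_card => y; rewrite !inE andbT.
  have := key predT; rewrite !E1; apply; exact: Hw.
apply/ffunP => y.
have := congr1 (fun F : boolfun 'I_n => F (extend_assign alpha y)) HG.
by rewrite /= !ffunE ext_A projK.
Qed.
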